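(* Let $S\subseteq[n]$. Suppose each strategic agent $k\in S$ chooses a random vector $\delta_k\in\mathbb{R}^n$ with finite first and second moments, independently across agents ($\delta_i=0$ for $i\notin S$), and that this profile is a (mixed) Nash equilibrium: for every $k\in S$, almost surely $\delta_k$ maximizes $x\mapsto\mathbb{E}[g_k(W'_x,P'_x)]$ over $x\in\mathbb{R}^n$, where $(W'_x,P'_x)$ is the stable point for positions $M+\Delta_x$ with $\Delta_xe_k=x$, $\Delta_xe_j=\delta_j$ ($j\neq k$), and the expectation is over $\{\delta_j:j\in S\setminus\{k\}\}$. Then each $\delta_k$ is almost surely equal to a deterministic vector; i.e., every Nash equilibrium is a pure-strategy Nash equilibrium.
   Context: Fix agents $[n]=\{1,\dots,n\}$. Let $\Sigma\in\mathbb{R}^{n\times n}$ be symmetric positive definite, $\Gamma=\mathrm{diag}(\gamma_1,\dots,\gamma_n)$ with all $\gamma_i>0$, and let $M\in\mathbb{R}^{n\times n}$ be the matrix of true beliefs with $i$-th column $\mu_i=Me_i$. For a matrix of reported negotiating positions $M'\in\mathbb{R}^{n\times n}$, the stable point for $M'$ is the unique pair $(W,P)$ of real $n\times n$ matrices with $W=W^T$, $P^T=-P$ and $M'-P=2\Sigma W\Gamma$; equivalently $\mathrm{vec}(W)=\tfrac12(\Gamma\otimes\Sigma+\Sigma\otimes\Gamma)^{-1}\mathrm{vec}(M'+M'^T)$ and $P=M'-2\Sigma W\Gamma$. Here $\mathrm{vec}$ stacks columns and $e_i$ is the $i$-th standard basis vector. Agent $i$'s (true) utility at $(W,P)$ is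 $g_i(W,P)=w_i^T(\mu_i-Pe_i)-\gamma_i\, w_i^T\Sigma w_i$, where $w_i=We_i$. *)

(* Defs.v *)
From HB Require Import structures.
From mathcomp Require Import all_boot all_order all_algebra.
From mathcomp Require Import all_classical all_reals all_analysis.
Set Implicit Arguments. Unset Strict Implicit. Unset Printing Implicit Defensive.
Import Order.TTheory GRing.Theory Num.Theory.
Local Open Scope ring_scope.
Local Open Scope classical_set_scope.

Section Defs.
Variables (R : realType) (n : nat).

Definition sym_posdef (Sigma : 'M[R]_n) : Prop :=
  Sigma^T = Sigma /\
  forall v : 'cV[R]_n, v != 0 -> 0 < (v^T *m Sigma *m v) 0 0.

Definition is_stable_point (Sigma : 'M[R]_n) (gamma : 'rV[R]_n)
  (M' : 'M[R]_n) (WP : 'M[R]_n * 'M[R]_n) : Prop :=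
  WP.1^T = WP.1 /\ WP.2^T = - WP.2 /\
  M' - WP.2 = 2%:R *: (Sigma *m WP.1 *m diag_mx gamma).

(* "the" stable point (unique when Sigma is SPD and gamma > 0) *)
Definition stable_point (Sigma : 'M[R]_n) (gamma : 'rV[R]_n) (M' : 'M[R]_n)
  : 'M[R]_n * 'M[R]_n :=
  xget (0, 0) (is_stable_point Sigma gamma M').

Definition utility (Sigma : 'M[R]_n) (gamma : 'rV[R]_n) (M : 'M[R]_n)
  (i : 'I_n) (WP : 'M[R]_n * 'M[R]_n) : R :=
  ((col i WP.1)^T *m (col i M - col i WP.2)) 0 0
  - gamma 0 i * ((col i WP.1)^T *m Sigma *m col i WP.1) 0 0.

Definition deviate (M : 'M[R]_n) (d : 'I_n -> 'cV[R]_n) (k : 'I_n)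
  (x : 'cV[R]_n) : 'M[R]_n :=
  M + \matrix_(a < n, b < n) (if b == k then x a 0 else d b a 0).

End Defs.

Section Prob.
Local Open Scope ereal_scope.
Context {d : measure_display} {Omega : measurableType d} {R : realType} {n : nat}.

(* mutual independence of the random vectors (delta_k)_{k in S}: the joint
   law factorizes on all measurable coordinate rectangles (a pi-system
   generating each sigma(delta_k)); taking A k i = setT for agents outside a
   subfamily gives the product rule for every subfamily. *)
Definition indep_vectors (P : probability Omega R) (S : {set 'I_n})
  (delta : 'I_n -> Omega -> 'cV[R]_n) : Prop :=
  forall A : 'I_n -> 'I_n -> set R, (forall k i, measurable (A k i)) ->
    P [set w | forall k, k \in S -> forall i, A k i (delta k w i 0%R)]
    = \prod_(k in S) P [set w | forall i, A k i (delta k w i 0%R)].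

Definition exp_utility (P : probability Omega R) (Sigma : 'M[R]_n)
  (gamma : 'rV[R]_n) (M : 'M[R]_n) (delta : 'I_n -> Omega -> 'cV[R]_n)
  (k : 'I_n) (x : 'cV[R]_n) : \bar R :=
  \int[P]_w (utility Sigma gamma M k
               (stable_point Sigma gamma (deviate M (delta^~ w) k x)))%:E.

End Prob.

(* Main.v *)
Require Import Defs.
From HB Require Import structures.
From mathcomp Require Import all_boot all_order all_algebra.
From mathcomp Require Import all_classical all_reals all_analysis.
From mathcomp.algebra_tactics Require Import ring lra.
Import Order.TTheory GRing.Theory Num.Theory.
Local Open Scope ring_scope.
Module Helpers.
Set Implicit Arguments. Unset Strict Implicit. Unset Printing Implicit Defensive.

Section LA.
Variables (R : realType) (n : nat) (Sigma : 'M[R]_n) (gamma : 'rV[R]_n).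
Hypothesis HS : sym_posdef Sigma.
Hypothesis Hg : forall i, 0 < gamma 0 i.

Definition sx (u : 'cV[R]_n) : R := (u^T *m Sigma *m u) 0 0.

Lemma sx_ge0 u : 0 <= sx u.
Proof.
have [->|u0] := eqVneq u 0.
  by rewrite /sx mulmx0 mxE.
by apply/ltW; case: HS => _ /(_ u u0).
Qed.

Lemma sx_eq0 u : sx u = 0 -> u = 0.
Proof.
move=> h; apply/eqP; apply/negPn/negP => u0.
by case: HS => _ /(_ u u0); rewrite -/(sx u) h ltxx.
Qed.

Lemma trace_key (W : 'M[R]_n) :
  \tr (W^T *m Sigma *m W *m diag_mx gamma) = \sum_i gamma 0 i * sx (col i W).
Proof.
rewrite /mxtrace; apply: eq_bigr => i _; rewrite mul_mx_diag mxE mulrC.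
congr (_ * _); rewrite /sx !mxE; apply: eq_bigr => k _; rewrite !mxE.
by congr (_ * _); apply: eq_bigr => l _; rewrite !mxE.
Qed.

Lemma sum_g_ge0 (W : 'M[R]_n) : 0 <= \sum_i gamma 0 i * sx (col i W).
Proof. by apply: sumr_ge0 => i _; apply: mulr_ge0; [apply: ltW | apply: sx_ge0]. Qed.

Lemma sum_g_eq0 (W : 'M[R]_n) : \sum_i gamma 0 i * sx (col i W) = 0 -> W = 0.
Proof.
move=> h; apply/matrixP => a b; rewrite mxE.
have := psumr_eq0P (fun i _ => mulr_ge0 (ltW (Hg i)) (sx_ge0 (col i W))) h.
move=> /(_ b isT) /eqP; rewrite mulf_eq0 (gt_eqF (Hg b)) /= => /eqP /sx_eq0.
by move=> /colP /(_ a); rewrite !mxE.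
Qed.

Lemma tr_skew (W P : 'M[R]_n) : W^T = W -> P^T = - P -> \tr (W *m P) = 0.
Proof.
move=> hW hP.
have : \tr (W *m P) = - \tr (W *m P).
  rewrite -{1}mxtrace_tr trmx_mul hW hP mulNmx raddfN /= mxtrace_mulC //.
lra.
Qed.

Lemma trace_stable (M' W P : 'M[R]_n) :
  is_stable_point Sigma gamma M' (W, P) ->
  \tr (W *m M') = 2 * \sum_i gamma 0 i * sx (col i W).
Proof.
move=> [/= hW [/= hP hE]].
have -> : M' = 2%:R *: (Sigma *m W *m diag_mx gamma) + P by rewrite -hE subrK.
rewrite mulmxDr mxtraceD (@tr_skew _ _ hW hP) addr0 -scalemxAr mxtraceZ.
by rewrite -trace_key hW !mulmxA.
Qed.


Lemma stable_comb (a b : R) (M1 M2 W1 P1 W2 P2 : 'M[R]_n) :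
  is_stable_point Sigma gamma M1 (W1, P1) ->
  is_stable_point Sigma gamma M2 (W2, P2) ->
  is_stable_point Sigma gamma (a *: M1 + b *: M2) (a *: W1 + b *: W2, a *: P1 + b *: P2).
Proof.
move=> [/= hW1 [/= hP1 hE1]] [/= hW2 [/= hP2 hE2]]; split => /=.
  by rewrite linearD !linearZ /= hW1 hW2.
split => /=.
  by rewrite linearD !linearZ /= hP1 hP2 !scalerN opprD.
rewrite opprD addrACA -!scalerBr hE1 hE2.
rewrite mulmxDr mulmxDl -!scalemxAr -!scalemxAl scalerDr !scalerA.
by rewrite (mulrC a) (mulrC b).
Qed.

Lemma stable_unique (M' W1 P1 W2 P2 : 'M[R]_n) :
  is_stable_point Sigma gamma M' (W1, P1) ->
  is_stable_point Sigma gamma M' (W2, P2) -> W1 = W2 /\ P1 = P2.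
Proof.
move=> h1 h2.
have := @stable_comb 1 (-1) _ _ _ _ _ _ h1 h2; rewrite !scale1r !scaleN1r subrr => h.
have := @trace_stable _ _ _ h; rewrite mulmx0 mxtrace0 => /esym h0.
have hs : \sum_i gamma 0 i * sx (col i (W1 - W2)) = 0 by lra.
have hW := @sum_g_eq0 _ hs.
move: h => [_ [_ /=]]; rewrite hW mulmx0 mul0mx scaler0 sub0r => /eqP.
rewrite oppr_eq0 subr_eq0 => /eqP ->; split => //.
by apply/eqP; rewrite -subr_eq0 hW.
Qed.

Definition Fl := (mulmx Sigma \o mulmxr (diag_mx gamma)) \+ (mulmx (diag_mx gamma) \o mulmxr Sigma).

Lemma FlE W : Fl W = Sigma *m (W *m diag_mx gamma) + diag_mx gamma *m (W *m Sigma).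
Proof. by []. Qed.

Lemma FlB A B : Fl (A - B) = Fl A - Fl B.
Proof. by rewrite !FlE !mulmxBl !mulmxBr opprD addrACA. Qed.

Lemma FlT A : Sigma^T = Sigma -> Fl A^T = (Fl A)^T.
Proof.
move=> hSt; rewrite !FlE linearD /= !trmx_mul tr_diag_mx hSt.

by rewrite addrC !mulmxA.
Qed.

Lemma Fl_inj W : Fl W = 0 -> W = 0.
Proof.
move=> h.
have : \tr (W^T *m Fl W) = 0 by rewrite h mulmx0 mxtrace0.
rewrite FlE mulmxDr mxtraceD.
have -> : \tr (W^T *m (Sigma *m (W *m diag_mx gamma))) = \sum_i gamma 0 i * sx (col i W).
  by rewrite -trace_key !mulmxA.
have -> : \tr (W^T *m (diag_mx gamma *m (W *m Sigma))) = \sum_i gamma 0 i * sx (col i W^T).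
  rewrite -trace_key trmxK !mulmxA mxtrace_mulC !mulmxA.
  by rewrite -(mulmxA _ Sigma) mxtrace_mulC !mulmxA.
have := sum_g_ge0 W; have := sum_g_ge0 W^T => h1 h2 h3.
by apply: sum_g_eq0; lra.
Qed.

Lemma stable_exists (M' : 'M[R]_n) : exists WP, is_stable_point Sigma gamma M' WP.
Proof.
set K := lin_mx Fl.
have Ku : K \in unitmx.
  rewrite -row_free_unit; apply: inj_row_free => v hv.
  have : Fl (vec_mx v) = 0.
    by apply: (etrans (esym (mx_rV_lin Fl v))); rewrite -/K hv linear0.
  by move/Fl_inj => /(congr1 mxvec); rewrite vec_mxK linear0.
set W := vec_mx (mxvec (2^-1 *: (M' + M'^T)) *m invmx K).
have hF : Fl W = 2^-1 *: (M' + M'^T).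
  apply: (etrans (esym (mx_vec_lin Fl W))); by rewrite -/K vec_mxK mulmxKV // mxvecK.
case: HS => hSt _.
have hW : W^T = W.
  apply/eqP; rewrite -subr_eq0; apply/eqP/Fl_inj.
  rewrite FlB FlT // hF linearZ /= linearD /= trmxK addrC (addrC M'^T) addNr //.
pose P0 := M' - 2%:R *: (Sigma *m W *m diag_mx gamma).
apply: (@ex_intro _ _ (W, P0)).
split; first exact: hW.
split; last by rewrite /= opprB addrC subrK.
move: hF; rewrite FlE => hF.
rewrite linearB /= linearZ /= !trmx_mul tr_diag_mx hSt hW.
have hY : diag_mx gamma *m (W *m Sigma) = 2^-1 *: (M' + M'^T) - Sigma *m (W *m diag_mx gamma).
  by rewrite -hF addrAC subrr add0r.
rewrite /P0 -mulmxA hY; move: (Sigma *m (W *m diag_mx gamma)) => X.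
apply/matrixP => i j; rewrite !mxE; lra.
Qed.


Lemma sp_spec M' : is_stable_point Sigma gamma M' (stable_point Sigma gamma M').
Proof. by apply: xgetPex; apply: stable_exists. Qed.

Lemma sp_eq M' W P : is_stable_point Sigma gamma M' (W, P) ->
  stable_point Sigma gamma M' = (W, P).
Proof.
move=> h; have := sp_spec M'; case: (stable_point Sigma gamma M') => W' P' h'.
by have [-> ->] := stable_unique h' h.
Qed.

Lemma entB p q (A B : 'M[R]_(p, q)) i j : (A - B) i j = A i j - B i j.
Proof. by rewrite !mxE. Qed.
Lemma entD p q (A B : 'M[R]_(p, q)) i j : (A + B) i j = A i j + B i j.
Proof. by rewrite !mxE. Qed.
Lemma entZ p q a (A : 'M[R]_(p, q)) i j : (a *: A) i j = a * A i j.
Proof. by rewrite !mxE. Qed.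

Definition Dv (k : 'I_n) (v : 'cV[R]_n) : 'M[R]_n :=
  \matrix_(a < n, b < n) (if b == k then v a 0 else 0).

Definition Qf (k : 'I_n) (WP : 'M[R]_n * 'M[R]_n) : R :=
  ((col k WP.1)^T *m col k WP.2) 0 0 + gamma 0 k * sx (col k WP.1).

Lemma Qf_pos k v W P : v != 0 -> is_stable_point Sigma gamma (Dv k v) (W, P) ->
  0 < Qf k (W, P).
Proof.
move=> v0 hst; have hT := @trace_stable _ _ _ hst.
move: hst => [/= hW [/= hP hE]].
set T := \sum_i gamma 0 i * sx (col i W) in hT.
have hc : col k P = v - (2 * gamma 0 k) *: (Sigma *m col k W).
  apply/colP => i; have := congr1 (fun A : 'M[R]_n => A i k) hE => /=.
  rewrite mul_mx_diag !mxE eqxx.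
  have -> : \sum_j Sigma i j * col k W j 0 = \sum_j Sigma i j * W j k.
    by apply: eq_bigr => j _; rewrite mxE.
  move: (\sum_j Sigma i j * W j k) => s; nra.
have hB : ((col k W)^T *m v) 0 0 = \tr (W *m Dv k v).
  rewrite /mxtrace (bigD1 k) //= big1 ?addr0; last first.
    move=> i /negPf ik; rewrite mxE big1 // => j _; rewrite mxE ik mulr0 //.
  rewrite !mxE; apply: eq_bigr => j _; rewrite !mxE eqxx.
  have hWs : forall a b, W a b = W b a by move=> a b; rewrite -{1}hW mxE.
  by rewrite hWs.
have hs : ((col k W)^T *m (Sigma *m col k W)) 0 0 = sx (col k W) by rewrite /sx mulmxA.
rewrite /Qf /= hc mulmxBr -scalemxAr entB entZ hs hB hT.
have hT0 : 0 < T.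
  rewrite lt_def sum_g_ge0 andbT; apply/eqP => /(@sum_g_eq0 _) W0.
  move: hE; rewrite W0 mulmx0 mul0mx scaler0 => /eqP; rewrite subr_eq0 => /eqP hDP.
  move: hP; rewrite -hDP => /matrixP hD.
  move/eqP: v0; apply; apply/colP => a; rewrite mxE.
  have := hD k a; rewrite !mxE.
  case: (eqVneq k k) => [_|]; last by rewrite eqxx.
  case: (eqVneq a k) => [->|ak]; lra.
have hrest : 0 <= \sum_(i | i != k) gamma 0 i * sx (col i W).
  by apply: sumr_ge0 => i _; apply: mulr_ge0; [apply: ltW | apply: sx_ge0].
have hsplit : T = gamma 0 k * sx (col k W) + \sum_(i | i != k) gamma 0 i * sx (col i W).
  by rewrite /T (bigD1 k).
have := sx_ge0 (col k W); have := Hg k; nra.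
Qed.


Definition dot (u v : 'cV[R]_n) : R := (u^T *m v) 0 0.

Lemma dotDl u v w : dot (u + v) w = dot u w + dot v w.
Proof. by rewrite /dot linearD /= mulmxDl entD. Qed.
Lemma dotDr u v w : dot w (u + v) = dot w u + dot w v.
Proof. by rewrite /dot mulmxDr entD. Qed.
Lemma dotBl u v w : dot (u - v) w = dot u w - dot v w.
Proof. by rewrite /dot linearB /= mulmxBl entB. Qed.
Lemma dotBr u v w : dot w (u - v) = dot w u - dot w v.
Proof. by rewrite /dot mulmxBr entB. Qed.
Lemma dotZl a u w : dot (a *: u) w = a * dot u w.
Proof. by rewrite /dot linearZ /= -scalemxAl entZ. Qed.
Lemma dotZr a u w : dot w (a *: u) = a * dot w u.
Proof. by rewrite /dot -scalemxAr entZ. Qed.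

Lemma dotNl u w : dot (- u) w = - dot u w.
Proof. by rewrite -scaleN1r dotZl mulN1r. Qed.
Lemma dotNr u w : dot w (- u) = - dot w u.
Proof. by rewrite -scaleN1r dotZr mulN1r. Qed.

Lemma colD' k (A B : 'M[R]_n) : col k (A + B) = col k A + col k B.
Proof. by apply/colP => i; rewrite !mxE. Qed.
Lemma colB' k (A B : 'M[R]_n) : col k (A - B) = col k A - col k B.
Proof. by apply/colP => i; rewrite !mxE. Qed.
Lemma colZ' k a (A : 'M[R]_n) : col k (a *: A) = a *: col k A.
Proof. by apply/colP => i; rewrite !mxE. Qed.

Lemma utilE M k W P : utility Sigma gamma M k (W, P) =
  dot (col k W) (col k M - col k P) - gamma 0 k * dot (col k W) (Sigma *m col k W).
Proof. by rewrite /utility /dot mulmxA. Qed.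

Lemma sxE u : sx u = dot u (Sigma *m u).
Proof. by rewrite /sx /dot mulmxA. Qed.

Lemma util_mid M k (W1 P1 W2 P2 : 'M[R]_n) :
  utility Sigma gamma M k (2^-1 *: (W1 + W2), 2^-1 *: (P1 + P2)) =
  2^-1 * (utility Sigma gamma M k (W1, P1) + utility Sigma gamma M k (W2, P2))
  + 4^-1 * Qf k (W1 - W2, P1 - P2).
Proof.
rewrite !utilE /Qf /= -/(dot _ _) sxE !colZ' !colB' !colD'.
rewrite -?scalemxAr ?mulmxBr ?mulmxDr.
rewrite !(dotDl, dotDr, dotBl, dotBr, dotZl, dotZr, dotNl, dotNr).
set c := 4^-1; have hc : c = 2^-1 * 2^-1.
  by rewrite /c -invfM; congr (_^-1); rewrite -natrM.
by rewrite hc; field.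
Qed.

End LA.

Section Int.
Context {d : measure_display} {Omega : measurableType d} {R : realType}.
Variable P : probability Omega R.

Definition L1 (f : Omega -> R) := P.-integrable setT (fun w => (f w)%:E).
Definition L2 (f : Omega -> R) := measurable_fun setT f /\ L1 (fun w => f w ^+ 2).

Lemma L1_meas f : L1 f -> measurable_fun setT f.
Proof. by move=> /integrableP [/measurable_realfun.measurable_EFinP]. Qed.

Lemma L1D f g : L1 f -> L1 g -> L1 (fun w => f w + g w).
Proof.
move=> hf hg; rewrite /L1.
have -> : (fun w => (f w + g w)%:E) = ((fun w => (f w)%:E) \+ (fun w => (g w)%:E))%E.
  by apply/funext => w; rewrite EFinD.
exact: integrableD.
Qed.

Lemma L1Z c f : L1 f -> L1 (fun w => c * f w).
Proof.
move=> hf; rewrite /L1.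
have -> : (fun w => (c * f w)%:E) = (fun w => c%:E * (f w)%:E)%E.
  by apply/funext => w; rewrite EFinM.
exact: integrableZl.
Qed.

Lemma L1cst c : L1 (fun _ => c).
Proof. exact: (finite_measure_integrable_cst P c measurableT). Qed.

Lemma L1_sum (I : Type) (s : seq I) (F : I -> Omega -> R) :
  (forall i, L1 (F i)) -> L1 (fun w => \sum_(i <- s) F i w).
Proof.
move=> hF; rewrite /L1.
have -> : (fun w => (\sum_(i <- s) F i w)%:E) = (fun w => \sum_(i <- s) (F i w)%:E)%E.
  by apply/funext => w; rewrite sumEFin.
by apply: integrable_sum => // i _; apply: hF.
Qed.

Lemma L1M f g : L2 f -> L2 g -> L1 (fun w => f w * g w).
Proof.
move=> [mf hf] [mg hg]; rewrite /L1.
apply: (le_integrable measurableT _ _ (L1D hf hg)).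
  by apply/measurable_realfun.measurable_EFinP; apply: measurable_realfun.measurable_funM.
move=> w _; rewrite !abse_EFin lee_fin.
have h1 : 0 <= f w ^+ 2 + g w ^+ 2 by rewrite addr_ge0 // sqr_ge0.
rewrite (ger0_norm h1) normrM.
have := normr_ge0 (f w); have := normr_ge0 (g w).
rewrite -[f w ^+ 2](real_normK (num_real (f w))) -[g w ^+ 2](real_normK (num_real (g w))).
move: `|f w| `|g w| => a b ha hb; nra.
Qed.

Lemma L2cst c : L2 (fun _ => c).
Proof. by split; [apply: measurable_cst | apply: L1cst]. Qed.

Lemma L2D f g : L2 f -> L2 g -> L2 (fun w => f w + g w).
Proof.
move=> hf hg; split.
  by apply: measurable_realfun.measurable_funD; [case: hf | case: hg].
have -> : (fun w => (f w + g w) ^+ 2) =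
  (fun w => f w ^+ 2 + (2 * (f w * g w) + g w ^+ 2)).
  by apply/funext => w; ring.
apply: L1D; first by case: hf.
by apply: L1D; [apply: L1Z; apply: L1M | case: hg].
Qed.

Lemma L2Z c f : L2 f -> L2 (fun w => c * f w).
Proof.
move=> [mf hf]; split.
  by apply: measurable_realfun.measurable_funM => //; apply: measurable_cst.
have -> : (fun w => (c * f w) ^+ 2) = (fun w => c ^+ 2 * f w ^+ 2).
  by apply/funext => w; ring.
exact: L1Z.
Qed.

Lemma L2Zr c f : L2 f -> L2 (fun w => f w * c).
Proof.
move=> h; have -> : (fun w => f w * c) = (fun w => c * f w).
  by apply/funext => w; rewrite mulrC.
exact: L2Z.
Qed.

Lemma L2_sum (I : Type) (s : seq I) (F : I -> Omega -> R) :
  (forall i, L2 (F i)) -> L2 (fun w => \sum_(i <- s) F i w).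
Proof.
move=> hF; elim: s => [|i s IH].
  have -> : (fun w => \sum_(i <- [::]) F i w) = (fun _ => 0).
    by apply/funext => w; rewrite big_nil.
  exact: L2cst.
have -> : (fun w => \sum_(j <- i :: s) F j w) = (fun w => F i w + \sum_(j <- s) F j w).
  by apply/funext => w; rewrite big_cons.
exact: L2D.
Qed.

Lemma L1_sumL2 (I : Type) (s : seq I) (F : I -> Omega -> R) :
  (forall i, L1 (F i)) -> L1 (fun w => \sum_(i <- s) F i w).
Proof. exact: L1_sum. Qed.

End Int.

Section Main.
Context {d : measure_display} {Omega : measurableType d} {R : realType} {n : nat}.
Variables (P : probability Omega R) (Sigma : 'M[R]_n) (gamma : 'rV[R]_n).
Hypothesis HS : sym_posdef Sigma.
Hypothesis Hg : forall i, 0 < gamma 0 i.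

Definition sp1 A := (stable_point Sigma gamma A).1.
Definition sp2 A := (stable_point Sigma gamma A).2.

Lemma sp_lin a A B : stable_point Sigma gamma (a *: A + B) =
  (a *: sp1 A + sp1 B, a *: sp2 A + sp2 B).
Proof.
apply: (sp_eq HS Hg).
have := stable_comb a 1 (sp_spec HS Hg A) (sp_spec HS Hg B).
by rewrite !scale1r.
Qed.

Lemma sp0 : stable_point Sigma gamma 0 = (0, 0).
Proof.
apply: (sp_eq HS Hg).
by split; [|split]; rewrite /= ?trmx0 ?oppr0 ?mulmx0 ?mul0mx ?scaler0 ?subrr ?addr0.
Qed.

Lemma sp1D A B : sp1 (A + B) = sp1 A + sp1 B.
Proof. by rewrite {1}/sp1; have := sp_lin 1 A B; rewrite !scale1r => ->. Qed.
Lemma sp2D A B : sp2 (A + B) = sp2 A + sp2 B.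
Proof. by rewrite {1}/sp2; have := sp_lin 1 A B; rewrite !scale1r => ->. Qed.
Lemma sp1_0 : sp1 0 = 0. Proof. by rewrite /sp1 sp0. Qed.
Lemma sp2_0 : sp2 0 = 0. Proof. by rewrite /sp2 sp0. Qed.
Lemma sp1Z a A : sp1 (a *: A) = a *: sp1 A.
Proof. by rewrite {1}/sp1; have := sp_lin a A 0; rewrite addr0 => ->; rewrite /= sp1_0 addr0. Qed.
Lemma sp2Z a A : sp2 (a *: A) = a *: sp2 A.
Proof. by rewrite {1}/sp2; have := sp_lin a A 0; rewrite addr0 => ->; rewrite /= sp2_0 addr0. Qed.

Lemma sp1E A p q : sp1 A p q = \sum_a \sum_b A a b * sp1 (delta_mx a b) p q.
Proof.
rewrite {1}[A]matrix_sum_delta (big_morph _ sp1D sp1_0) summxE.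
apply: eq_bigr => a _; rewrite (big_morph _ sp1D sp1_0) summxE.
by apply: eq_bigr => b _; rewrite sp1Z entZ.
Qed.

Lemma sp2E A p q : sp2 A p q = \sum_a \sum_b A a b * sp2 (delta_mx a b) p q.
Proof.
rewrite {1}[A]matrix_sum_delta (big_morph _ sp2D sp2_0) summxE.
apply: eq_bigr => a _; rewrite (big_morph _ sp2D sp2_0) summxE.
by apply: eq_bigr => b _; rewrite sp2Z entZ.
Qed.


Lemma util_sum M k (WP : 'M[R]_n * 'M[R]_n) : utility Sigma gamma M k WP =
  \sum_i WP.1 i k * (M i k - WP.2 i k)
  - gamma 0 k * \sum_j (\sum_i WP.1 i k * Sigma i j) * WP.1 j k.
Proof.
rewrite /utility !mxE; congr (_ - _ * _).
  by apply: eq_bigr => i _; rewrite !mxE.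
apply: eq_bigr => j _; rewrite !mxE; congr (_ * _).
by apply: eq_bigr => i _; rewrite !mxE.
Qed.

Lemma L2_sp1 (D : Omega -> 'M[R]_n) : (forall a b, L2 P (fun w => D w a b)) ->
  forall p q, L2 P (fun w => sp1 (D w) p q).
Proof.
move=> hD p q.
have -> : (fun w => sp1 (D w) p q) =
  (fun w => \sum_a \sum_b D w a b * sp1 (delta_mx a b) p q).
  by apply/funext => w; rewrite sp1E.
apply: L2_sum => a; apply: L2_sum => b; exact: L2Zr.
Qed.

Lemma L2_sp2 (D : Omega -> 'M[R]_n) : (forall a b, L2 P (fun w => D w a b)) ->
  forall p q, L2 P (fun w => sp2 (D w) p q).
Proof.
move=> hD p q.
have -> : (fun w => sp2 (D w) p q) =
  (fun w => \sum_a \sum_b D w a b * sp2 (delta_mx a b) p q).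
  by apply/funext => w; rewrite sp2E.
apply: L2_sum => a; apply: L2_sum => b; exact: L2Zr.
Qed.

Lemma L1_util M k (D : Omega -> 'M[R]_n) : (forall a b, L2 P (fun w => D w a b)) ->
  L1 P (fun w => utility Sigma gamma M k (stable_point Sigma gamma (D w))).
Proof.
move=> hD; have h1 := L2_sp1 hD; have h2 := L2_sp2 hD.
have -> : (fun w => utility Sigma gamma M k (stable_point Sigma gamma (D w))) =
  (fun w => \sum_i sp1 (D w) i k * (M i k - sp2 (D w) i k)
     + (- gamma 0 k) * \sum_j (\sum_i sp1 (D w) i k * Sigma i j) * sp1 (D w) j k).
  by apply/funext => w; rewrite util_sum mulNr.
apply: L1D.
  apply: L1_sum => i; apply: L1M => //.
  apply: L2D; first exact: L2cst.
  have -> : (fun w => - sp2 (D w) i k) = (fun w => -1 * sp2 (D w) i k).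
    by apply/funext => w; rewrite mulN1r.
  exact: L2Z.
apply: L1Z; apply: L1_sum => j; apply: L1M => //.
apply: L2_sum => i; exact: L2Zr.
Qed.

Lemma dev_mid M (dd : 'I_n -> 'cV[R]_n) k x y :
  deviate M dd k (2^-1 *: (x + y)) = 2^-1 *: deviate M dd k x + 2^-1 *: deviate M dd k y.
Proof.
apply/matrixP => a b; rewrite !mxE; case: (b == k); lra.
Qed.

Lemma dev_diff M (dd : 'I_n -> 'cV[R]_n) k x y :
  1 *: deviate M dd k x + (-1) *: deviate M dd k y = Dv k (x - y).
Proof.
apply/matrixP => a b; rewrite !mxE; case: (b == k); lra.
Qed.

Lemma util_dev_mid M (dd : 'I_n -> 'cV[R]_n) k x y :
  utility Sigma gamma M k (stable_point Sigma gamma (deviate M dd k (2^-1 *: (x + y)))) =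
  2^-1 * (utility Sigma gamma M k (stable_point Sigma gamma (deviate M dd k x))
        + utility Sigma gamma M k (stable_point Sigma gamma (deviate M dd k y)))
  + 4^-1 * Qf Sigma gamma k (stable_point Sigma gamma (Dv k (x - y))).
Proof.
rewrite dev_mid -(dev_diff M dd k x y).
have hx := sp_spec HS Hg (deviate M dd k x).
have hy := sp_spec HS Hg (deviate M dd k y).
move: hx hy; case: (stable_point _ _ (deviate M dd k x)) => W1 P1 hx.
case: (stable_point _ _ (deviate M dd k y)) => W2 P2 hy.
rewrite (sp_eq HS Hg (stable_comb _ _ hx hy)).
rewrite (sp_eq HS Hg (stable_comb _ _ hx hy)).
rewrite !scale1r !scaleN1r -!scalerDr util_mid.
done.
Qed.

End Main.
End Helpers.
Import Helpers.
Local Open Scope classical_set_scope.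

Theorem mainTheorem8 (R : realType) (n : nat) (Sigma : 'M[R]_n)
  (gamma : 'rV[R]_n) (M : 'M[R]_n) (S : {set 'I_n})
  (d : measure_display) (Omega : measurableType d) (P : probability Omega R)
  (delta : 'I_n -> Omega -> 'cV[R]_n) :
  sym_posdef Sigma ->
  (forall i, 0 < gamma 0 i) ->
  (* finite first and second moments *)
  (forall k i, k \in S ->
     P.-integrable setT (fun w => (delta k w i 0%R)%:E) /\
     P.-integrable setT (fun w => ((delta k w i 0%R) ^+ 2)%:E)) ->
  (* non-strategic agents report their true beliefs *)
  (forall k w, k \notin S -> delta k w = 0) ->
  indep_vectors P S delta ->
  (* mixed Nash equilibrium *)
  (forall k, k \in S ->
     {ae P, forall w, forall x : 'cV[R]_n,
        (exp_utility P Sigma gamma M delta k x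
         <= exp_utility P Sigma gamma M delta k (delta k w))%E}) ->
  forall k, k \in S ->
    exists c : 'cV[R]_n, {ae P, forall w, delta k w = c}.
Proof.
move=> HS Hg Hmom H0 _ HN k kS.
pose f z w := utility Sigma gamma M k (stable_point Sigma gamma (deviate M (delta^~ w) k z)).
pose E z := exp_utility P Sigma gamma M delta k z.
have hL2 : forall z a b, L2 P (fun w => deviate M (delta^~ w) k z a b).
  move=> z a b.
  have -> : (fun w => deviate M (delta^~ w) k z a b) =
      (fun w => M a b + (if b == k then z a 0 else delta b w a 0)).
    by apply/funext => w; rewrite !mxE.
  apply: L2D; first exact: L2cst.
  case: (b == k); first exact: L2cst.
  case: (boolP (b \in S)) => bS.
    have [h1 h2] := Hmom b a bS; split => //; exact: L1_meas h1.
  have -> : (fun w => delta b w a 0) = (fun _ => 0).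
    by apply/funext => w; rewrite H0 // mxE.
  exact: L2cst.
have hL1 : forall z, L1 P (f z) := fun z => L1_util HS Hg M k (hL2 z).
have hfin : forall z, E z \is a fin_num :=
  fun z => integrable_fin_num measurableT (hL1 z).
have EE : forall z, E z = (fine (E z))%:E by move=> z; rewrite fineK.
have hmid : forall x y, E (2^-1 *: (x + y)) =
    (2^-1 * (fine (E x) + fine (E y))
     + 4^-1 * Qf Sigma gamma k (stable_point Sigma gamma (Dv k (x - y))))%:E.
  move=> x y; set q := Qf _ _ _ _.
  transitivity (\int[P]_w ((2^-1)%R%:E * ((f x w)%:E + (f y w)%:E) + (4^-1 * q)%R%:E))%E.
    apply: eq_integral => w _.
    by rewrite /f (util_dev_mid HS Hg) -EFinD.
  have ix := hL1 x; have iy := hL1 y.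
  rewrite integralD //; last exact: (finite_measure_integrable_cst P _ measurableT).
    rewrite integralZl //; last exact: integrableD.
    rewrite integralD // integral_cst //.
    rewrite [X in (_ + _ * X)%E](_ : _ = 1%E); last exact: probability_setT.
    rewrite mule1.
    have hx : (\int[P]_w (f x w)%:E)%E = (fine (E x))%:E := EE x.
    have hy : (\int[P]_w (f y w)%:E)%E = (fine (E y))%:E := EE y.
    by rewrite hx hy -EFinD.
  exact: (integrableZl measurableT _ (integrableD measurableT ix iy)).
have uniq : forall x y, (forall z, (E z <= E x)%E) -> (forall z, (E z <= E y)%E) -> x = y.
  move=> x y gx gy; apply/eqP; apply/negPn/negP => hxy.
  have v0 : x - y != 0 by rewrite subr_eq0.
  have hq := Qf_pos HS Hg v0 (sp_spec HS Hg (Dv k (x - y))).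
  have := gx (2^-1 *: (x + y)); have := gy (2^-1 *: (x + y)).
  have [rx Ex] : exists r, E x = r%:E by exists (fine (E x)); exact: EE.
  have [ry Ey] : exists r, E y = r%:E by exists (fine (E y)); exact: EE.
  rewrite hmid Ex Ey /= !lee_fin.
  set q := Qf _ _ _ _ in hq *.
  have hq4 : 0 < 4^-1 * q by apply: mulr_gt0.
  move: (4^-1 * q) hq4 => c hc h1 h2.
  have : 2^-1 * (rx + ry) <= 2^-1 * (rx + ry) + c - c by rewrite addrK.
  lra.
case: (HN k kS) => N [mN PN sub].
have [w0 g0] : exists w, forall x, (E x <= E (delta k w))%E.
  case: (pselect (exists w, forall x, (E x <= E (delta k w))%E)) => // hne.
  exfalso.
  have : (P setT <= P N)%E.
    apply: le_measure; rewrite ?inE //.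
    move=> w _; apply: sub => /= hw; apply: hne; exists w; exact: hw.
  by rewrite probability_setT PN lee_fin ler10.
exists (delta k w0); exists N; split => // w /= hne; apply: sub => /= hw.
by apply: hne; apply: uniq.
Qed.
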